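(* Let $m\ge 2$ and $n\ge1$ be integers with $m(n-1)$ even, let ${\bf h}\in\mathbb{R}^{m(n-1)+1}$, let $\mathcal{H}$ be the $m^{\rm th}$-order $n$-dimensional Hankel tensor generated by ${\bf h}$, and let $H$ be the associated Hankel matrix of $\mathcal{H}$. If $H$ has no negative (resp. no non-positive, no positive, no nonnegative) eigenvalues, then $\mathcal{H}$ has no negative (resp. no non-positive, no positive, no nonnegative) H-eigenvalues.
   Context: The Hankel tensor generated by ${\bf h}=(h_0,\dots,h_{m(n-1)})$ has entries $\mathcal{H}_{i_1\dots i_m}=h_{i_1+\dots+i_m}$, $0\le i_j\le n-1$; its associated Hankel matrix is the square matrix $H$ with $H_{ij}=h_{i+j}$, $0\le i,j\le m(n-1)/2$. For a real $m^{\rm th}$-order $n$-dimensional tensor $\mathcal{T}$, $(\mathcal{T}{\bf x}^{m-1})_i=\sum_{i_2,\dots,i_m}\mathcal{T}_{i i_2\dots i_m}x_{i_2}\cdots x_{i_m}$, and a real number $\lambda$ is an H-eigenvalue of $\mathcal{T}$ if there is a nonzero ${\bf x}\in\mathbb{R}^n$ with $\mathcal{T}{\bf x}^{m-1}=\lambda{\bf x}^{[m-1]}$, ${\bf x}^{[m-1]}=(x_1^{m-1},\dots,x_n^{m-1})^\top$. *)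

(* Defs.v *)
From HB Require Import structures.
From mathcomp Require Import all_boot all_order all_algebra.
From mathcomp Require Import reals.
Set Implicit Arguments. Unset Strict Implicit. Unset Printing Implicit Defensive.
Import Order.TTheory GRing.Theory Num.Theory.
Local Open Scope ring_scope.

(* A real m-th order n-dimensional
   tensor is given as T i f = T_{i i_2 ... i_m}, where the first index is
   i : 'I_n and the remaining m-1 indices are f : {ffun 'I_m.-1 -> 'I_n}. *)
Definition tensor (R : Type) (m n : nat) := 'I_n -> {ffun 'I_m.-1 -> 'I_n} -> R.

Definition tensor_apply (R : realType) (m n : nat) (T : tensor R m n)
    (x : 'rV[R]_n) : 'rV[R]_n :=
  \row_(i < n) \sum_(f : {ffun 'I_m.-1 -> 'I_n}) T i f * \prod_(k < m.-1) x 0 (f k).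

Definition pow_vec (R : realType) (n k : nat) (x : 'rV[R]_n) : 'rV[R]_n :=
  \row_(i < n) x 0 i ^+ k.

Definition H_eigenvalue (R : realType) (m n : nat) (T : tensor R m n) (lam : R) : Prop :=
  exists x : 'rV[R]_n, x != 0 /\ tensor_apply T x = lam *: pow_vec m.-1 x.

Definition hankel_tensor (R : realType) (m n : nat) (h : 'rV[R]_(m * (n - 1)).+1)
    : tensor R m n :=
  fun i f => h 0 (inord (i + \sum_(k < m.-1) (f k : nat))).

Definition hankel_matrix (R : realType) (m n : nat) (h : 'rV[R]_(m * (n - 1)).+1)
    : 'M[R]_((m * (n - 1))./2.+1) :=
  \matrix_(i, j) h 0 (inord (i + j)).

(* Main.v *)
Require Import Defs.
From HB Require Import structures.
From mathcomp Require Import all_boot all_order all_algebra.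
From mathcomp Require Import reals complex.
From mathcomp Require Import lra zify.
Import Order.TTheory GRing.Theory Num.Theory.
Local Open Scope ring_scope.

Section Spec.
Variable R : rcfType.
Local Notation C := (complex R).
Local Notation toC := (real_complex R).

Lemma toC_real (x : R) : toC x \is Num.real.
Proof. by apply/complex_realP; exists x. Qed.

Lemma eig_transfer n (A : 'M[R]_n) (d : C) :
  eigenvalue (map_mx toC A) d -> d \is Num.real -> eigenvalue A (complex.Re d).
Proof.
move=> ev dr; move: ev; rewrite -{1}(RRe_real dr) eigenvalue_root_char.
by rewrite -map_char_poly fmorph_root -eigenvalue_root_char.
Qed.

Local Open Scope sesquilinear_scope.

Lemma spec_decomp n (A : 'M[R]_n) : A^T = A ->
  exists d : 'rV[R]_n, (forall i, eigenvalue A (d 0 i)) /\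
   forall q : 'rV[R]_n, exists w : 'rV[C]_n, (q != 0 -> w != 0) /\
     toC ((q *m A *m q^T) 0 0) = \sum_i toC (d 0 i) * (w 0 i * (w 0 i)^*).
Proof.
move=> Asym.
set Ac := map_mx toC A.
have Ah : Ac \is hermsymmx.
  apply: realsym_hermsym.
    by apply/is_hermitianmxP; rewrite expr0 scale1r map_mx_id // /Ac map_trmx Asym.
  by apply/mxOverP => i j; rewrite mxE toC_real.
have /orthomx_spectralP Aeq := hermitian_normalmx Ah.
have Pu : spectralmx Ac \is unitarymx := spectral_unitarymx Ac.
have PU : spectralmx Ac \in unitmx := spectral_unit Ac.
have Dr := hermitian_spectral_diag_real Ah.
move: Aeq Pu PU Dr; set P := spectralmx Ac; set D := spectral_diag Ac.
move=> Aeq Pu PU Dr.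
exists (\row_i complex.Re (D 0 i)); split.
  move=> i; rewrite mxE; apply: eig_transfer; last by move/mxOverP: Dr => ->.
  apply/eigenvalueP; exists (row i P).
    rewrite -/Ac Aeq !mulmxA -row_mul mulmxV // row1 mul_mx_diag.
    rewrite rowE scalemxAl; congr (_ *m _).
    apply/matrixP => a b; rewrite !mxE; have [->|ne] := eqVneq b i; first by rewrite mulrC.
    by rewrite andbF mul0r mulr0.
  apply/eqP => r0.
  have : row i (P *m invmx P) = 0 by rewrite row_mul r0 mul0mx.
  by rewrite mulmxV // row1 => /rowP/(_ i); rewrite !mxE !eqxx /= => /eqP; rewrite oner_eq0.
move=> q; pose qc := map_mx toC q; exists (qc *m P^t*); split.
  move=> qn0; apply/eqP => w0; move/eqP: qn0; apply.
  have : qc = qc *m P^t* *m P by rewrite -mulmxA -invmx_unitary // mulVmx // mulmx1.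
  rewrite w0 mul0mx => /eqP; rewrite map_mx_eq0 => /eqP //.
transitivity ((map_mx toC (q *m A *m q^T)) 0 0); first by rewrite [RHS]mxE.
have qT : map_mx toC q^T = qc^t*.
  by apply/matrixP => a b; rewrite !mxE conj_Creal // toC_real.
rewrite !map_mxM qT -/qc -/Ac Aeq invmx_unitary //.
have -> : qc *m (P^t* *m diag_mx D *m P) *m qc^t* =
          (qc *m P^t*) *m diag_mx D *m (qc *m P^t*)^t*.
  by rewrite !mulmxA trmx_mul map_mxM trmxCK !mulmxA.
rewrite mxE; apply: eq_bigr => i _; rewrite mul_mx_diag !mxE.
move/mxOverP: Dr => /(_ 0 i) /RRe_real ->.
by rewrite mulrAC mulrC.
Qed.

Lemma psd_ge0 n (A : 'M[R]_n) : A^T = A -> (forall a, eigenvalue A a -> 0 <= a) ->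
  forall q : 'rV_n, 0 <= (q *m A *m q^T) 0 0.
Proof.
move=> As ev q; have [d [evd dec]] := @spec_decomp n A As; have [w [_ e]] := dec q.
rewrite -ler0c e.
apply: sumr_ge0 => i _; apply: mulr_ge0; last exact: mul_conjC_ge0.
by rewrite ler0c; apply: ev.
Qed.

Lemma psd_gt0 n (A : 'M[R]_n) : A^T = A -> (forall a, eigenvalue A a -> 0 < a) ->
  forall q : 'rV_n, q != 0 -> 0 < (q *m A *m q^T) 0 0.
Proof.
move=> As ev q qn0; have [d [evd dec]] := @spec_decomp n A As; have [w [wn0 e]] := dec q.
rewrite -ltcR rmorph0 e.
have [i wi] : exists i, w 0 i != 0.
  apply/existsP; apply: contraNT (wn0 qn0); rewrite negb_exists => /forallP H.
  by apply/eqP/rowP => i; rewrite mxE; apply/eqP; rewrite -[_ == _]negbK H.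
rewrite (bigD1 i) //=; apply: ltr_pwDl.
  by apply: mulr_gt0; [rewrite -[0]/(toC 0) ltcR; apply: ev | rewrite mul_conjC_gt0].
apply: sumr_ge0 => j _; apply: mulr_ge0; last exact: mul_conjC_ge0.
by rewrite ler0c; apply: ltW; apply: ev.
Qed.

Lemma eigN n (A : 'M[R]_n) a : eigenvalue (- A) a -> eigenvalue A (- a).
Proof.
move=> /eigenvalueP [v vA vn0]; apply/eigenvalueP; exists v => //.
by rewrite scaleNr -vA mulmxN opprK.
Qed.

Lemma nsd_le0 n (A : 'M[R]_n) : A^T = A -> (forall a, eigenvalue A a -> a <= 0) ->
  forall q : 'rV_n, (q *m A *m q^T) 0 0 <= 0.
Proof.
move=> As ev q; rewrite -oppr_ge0.
have := @psd_ge0 n (- A); rewrite linearN /= As => /(_ erefl).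
have H : forall a, eigenvalue (- A) a -> 0 <= a.
  by move=> a /eigN /ev; rewrite oppr_le0.
by move=> /(_ H q); rewrite mulmxN mulNmx mxE.
Qed.

Lemma nsd_lt0 n (A : 'M[R]_n) : A^T = A -> (forall a, eigenvalue A a -> a < 0) ->
  forall q : 'rV_n, q != 0 -> (q *m A *m q^T) 0 0 < 0.
Proof.
move=> As ev q qn0; rewrite -oppr_gt0.
have := @psd_gt0 n (- A); rewrite linearN /= As => /(_ erefl).
have H : forall a, eigenvalue (- A) a -> 0 < a.
  by move=> a /eigN /ev; rewrite oppr_lt0.
by move=> /(_ H q qn0); rewrite mulmxN mulNmx mxE.
Qed.
End Spec.

Section Hankel.
Variables (R : realType) (m n : nat) (h : 'rV[R]_(m * (n - 1)).+1).
Local Notation N := (m * (n - 1))%N.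

Definition Lh (p : {poly R}) := \sum_(k < N.+1) h 0 k * p`_k.

Lemma Lh_sum (I : finType) (c : I -> R) (d : I -> nat) :
  (forall i, (d i <= N)%N) -> Lh (\sum_i c i *: 'X^(d i)) = \sum_i c i * h 0 (inord (d i)).
Proof.
move=> dN; rewrite /Lh.
under eq_bigr do rewrite coef_sum mulr_sumr.
rewrite exchange_big /=; apply: eq_bigr => i _.
rewrite (bigD1 (inord (d i))) //= big1 ?addr0.
  by rewrite coefZ coefXn inordK ?ltnS // eqxx mulr1 mulrC.
move=> k kn; rewrite coefZ coefXn.
have -> : (val k == d i) = false.
  apply/negbTE; apply: contra kn => /eqP kd; apply/eqP/val_inj; rewrite /= -kd inordK //; exact: ltn_ord.
by rewrite mulr0n mulr0 mulr0.
Qed.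

Lemma poly_expand (Y : {poly R}) k : (size Y <= k)%N -> Y = \sum_(i < k) Y`_i *: 'X^i.
Proof.
move=> sY; rewrite -poly_def; apply/polyP => j; rewrite coef_poly.
case: ltnP => // kj; rewrite nth_default //; exact: leq_trans sY kj.
Qed.

Definition Px (x : 'rV[R]_n) : {poly R} := \sum_(i < n) x 0 i *: 'X^i.

Lemma size_Px x : (size (Px x) <= n)%N.
Proof.
apply/leq_sizeP => j hj; rewrite coef_sum big1 // => i _; rewrite coefZ coefXn.
have -> : (j == i) = false by apply/negbTE; rewrite neq_ltn (leq_trans (ltn_ord i) hj) orbT.
by rewrite mulr0.
Qed.

Lemma coef_Px x (i : 'I_n) : (Px x)`_i = x 0 i.
Proof.
rewrite coef_sum (bigD1 i) //= big1 ?addr0; first by rewrite coefZ coefXn eqxx mulr1.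
move=> k ki; rewrite coefZ coefXn.
have -> : ((i : nat) == k) = false by apply/negbTE; rewrite eq_sym.
by rewrite mulr0.
Qed.

Lemma sum_ffun_bound (i : 'I_n) (f : {ffun 'I_m.-1 -> 'I_n}) :
  (1 <= m)%N -> (i + \sum_(k < m.-1) (f k : nat) <= N)%N.
Proof.
move=> m1.
have s1 : (\sum_(k < m.-1) (f k : nat) <= \sum_(k < m.-1) (n - 1))%N.
  by apply: leq_sum => k _; have := ltn_ord (f k); lia.
rewrite sum_nat_const card_ord in s1.
have i1 : (i <= n - 1)%N by have := ltn_ord i; lia.
rewrite -[m in (_ <= m * _)%N](prednK m1) mulSn.
exact: leq_add.
Qed.

Lemma tensor_L (x : 'rV[R]_n) (Y : {poly R}) : (1 <= m)%N -> (size Y <= n)%N ->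
  \sum_(i < n) Y`_i * (tensor_apply (hankel_tensor h) x) 0 i = Lh (Y * (Px x) ^+ m.-1).
Proof.
move=> m1 sY.
have Pe : Px x ^+ m.-1 = \sum_(f : {ffun 'I_m.-1 -> 'I_n})
    (\prod_(k < m.-1) x 0 (f k)) *: 'X^(\sum_(k < m.-1) (f k : nat)).
  rewrite -[in LHS](card_ord m.-1) -prodr_const /Px bigA_distr_bigA /=.
  by apply: eq_bigr => f _; rewrite scaler_prod prodrXr.
rewrite Pe {2}(@poly_expand _ _ sY) mulr_suml.
under [in RHS]eq_bigr do rewrite mulr_sumr.
under [in RHS]eq_bigr do under eq_bigr do rewrite -scalerAl -scalerAr scalerA -exprD.
rewrite pair_bigA Lh_sum /=; last by move=> [i f]; exact: sum_ffun_bound.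
under eq_bigr do rewrite mxE mulr_sumr.
rewrite pair_bigA /=; apply: eq_bigr => -[i f] _ /=; rewrite /hankel_tensor.
by rewrite mulrA mulrAC.
Qed.

Lemma hankel_L (Q : {poly R}) : ~~ odd N -> (size Q <= N./2.+1)%N ->
  Lh (Q * Q) = ((\row_(j < N./2.+1) Q`_j) *m hankel_matrix h *m (\row_j Q`_j)^T) 0 0.
Proof.
move=> eN sQ; rewrite {1 2}(@poly_expand _ _ sQ) mulr_suml.
under eq_bigr do rewrite mulr_sumr.
under eq_bigr do under eq_bigr do rewrite -scalerAl -scalerAr scalerA -exprD.
rewrite pair_bigA Lh_sum /=; last first.
  move=> [a b] /=; have := odd_double_half N; rewrite (negbTE eN) add0n => e.
  rewrite -[X in (_ <= X)%N]e -addnn; apply: leq_add; rewrite -ltnS; exact: ltn_ord.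
rewrite [RHS]mxE.
under [RHS]eq_bigr do rewrite !mxE mulr_suml.
rewrite [RHS]exchange_big [RHS]pair_bigA /=; apply: eq_bigr => -[a b] _ /=.
by rewrite !mxE mulrAC.
Qed.

Lemma row_poly_neq0 (Q : {poly R}) k : (size Q <= k)%N -> Q != 0 -> \row_(j < k) Q`_j != 0.
Proof.
move=> sQ; apply: contra => /eqP r0; rewrite (@poly_expand _ _ sQ) big1 // => j _.
by move/rowP: r0 => /(_ j); rewrite !mxE => ->; rewrite scale0r.
Qed.

Lemma sum_pos k (F : 'I_k -> R) i0 : (forall i, 0 <= F i) -> 0 < F i0 -> 0 < \sum_i F i.
Proof.
move=> ge gt; rewrite (bigD1 i0) //=; apply: ltr_pwDl => //.
by apply: sumr_ge0 => i _; exact: ge.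
Qed.

Lemma key (lam : R) : (2 <= m)%N -> (1 <= n)%N -> ~~ odd N ->
  H_eigenvalue (hankel_tensor h) lam ->
  exists S : R, exists q : 'rV[R]_(N./2.+1),
    [/\ 0 < S, q != 0 & lam * S = (q *m hankel_matrix h *m q^T) 0 0].
Proof.
move=> m2 n1 eN [x [xn0 ex]].
have m1 : (1 <= m)%N by exact: ltnW.
set P := Px x.
have [i0 xi0] : exists i0, x 0 i0 != 0.
  apply/existsP; apply: contraNT xn0; rewrite negb_exists => /forallP H.
  by apply/eqP/rowP => i; rewrite mxE; apply/eqP; rewrite -[_ == _]negbK H.
have P0 : P != 0.
  by apply/eqP => P0; move: xi0; rewrite -(coef_Px x i0) -/P P0 coef0 eqxx.
have gen : forall Y : {poly R}, (size Y <= n)%N ->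
    lam * (\sum_(i < n) Y`_i * x 0 i ^+ m.-1) = Lh (Y * P ^+ m.-1).
  move=> Y sY; rewrite -tensor_L // mulr_sumr; apply: eq_bigr => i _.
  by rewrite ex !mxE mulrCA.
have sP := size_Px x.
have sPe : forall j, (size (P ^+ j) <= (n - 1) * j + 1)%N.
  move=> j; apply: leq_trans (size_poly_exp_leq P j) _; rewrite addn1 ltnS leq_mul2r.
  by apply/orP; right; move: sP; rewrite -/P; lia.
have pxg : forall i j, x 0 i ^+ (j.*2) = (x 0 i ^+ j) ^+ 2.
  by move=> i j; rewrite -muln2 exprM.
have pxpos : forall j, 0 < (x 0 i0 ^+ j) ^+ 2.
  by move=> j; rewrite lt0r sqr_ge0 andbT sqrf_eq0 expf_eq0 negb_and xi0 orbT.
case: (boolP (odd m)) => om.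
- set j := m./2.
  have mj : m = (j.*2).+1 by have := odd_double_half m; rewrite om.
  have on : ~~ odd (n - 1) by move: eN; rewrite oddM om.
  set k := (n - 1)./2.
  have nk : (n - 1)%N = k.*2 by have := odd_double_half (n - 1)%N; rewrite (negbTE on).
  set a := i0./2; set b := uphalf i0.
  have o1 : (odd i0 <= 1)%N by case: odd.
  have ab : (a + b)%N = i0.
    by rewrite /a /b uphalf_half; have := odd_double_half i0; lia.
  have bk : (b <= k)%N.
    by rewrite /b uphalf_half; have := odd_double_half i0; have := ltn_ord i0; lia.
  have ab' : (a <= b)%N by rewrite /a /b uphalf_half; lia.
  set Z : {poly R} := 'X^a + 'X^b.
  have sZ : (size Z <= b.+1)%N.
    apply: leq_trans (size_polyD _ _) _; rewrite !size_polyXn geq_max; lia.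
  have Yc : forall i, (Z * Z)`_i = (i == a + a)%N%:R + (i == a + b)%N%:R
                                  + ((i == b + a)%N%:R + (i == b + b)%N%:R).
    by move=> i; rewrite /Z mulrDl !mulrDr -!exprD !coefD !coefXn.
  have c0 : forall i, 0 <= (Z * Z)`_i.
    by move=> i; rewrite Yc !addr_ge0 ?ler0n.
  have c1 : 0 < (Z * Z)`_i0.
    rewrite Yc ab eqxx mulr1n; have := ler0n R (val i0 == a + a)%N;
    have := ler0n R (val i0 == b + a)%N; have := ler0n R (val i0 == b + b)%N.
    lra.
  have Z0 : Z != 0.
    by apply/eqP => Z0; move: c1; rewrite Z0 mul0r coef0 ltxx.
  have sY : (size (Z * Z)%R <= n)%N.
    by apply: leq_trans (size_polyMleq _ _) _; lia.
  set Q := Z * P ^+ j.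
  have eY : Z * Z * P ^+ m.-1 = Q * Q by rewrite mj /= -addnn exprD mulrACA.
  have NE : N./2 = (m * k)%N by rewrite nk -doubleMr doubleK.
  have sQ : (size Q <= N./2.+1)%N.
    apply: leq_trans (size_polyMleq _ _) _; rewrite NE; have := sPe j; nia.
  exists (\sum_(i < n) (Z * Z)`_i * x 0 i ^+ m.-1), (\row_(j < N./2.+1) Q`_j); split.
  + apply: (@sum_pos _ _ i0) => [i|]; rewrite mj /= pxg.
      by apply: mulr_ge0; [exact: c0 | exact: sqr_ge0].
    by apply: mulr_gt0.
  + by apply: row_poly_neq0 => //; apply: mulf_neq0 => //; exact: expf_neq0.
  + by rewrite gen // eY hankel_L.
- set j := m./2.
  have mj : m = j.*2 by have := odd_double_half m; rewrite (negbTE om).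
  set Q := P ^+ j.
  have eY : P * P ^+ m.-1 = Q * Q by rewrite -exprS prednK // mj -addnn exprD.
  have NE : N./2 = (j * (n - 1))%N by rewrite mj -doubleMl doubleK.
  have sQ : (size Q <= N./2.+1)%N by rewrite /Q NE; have := sPe j; nia.
  exists (\sum_(i < n) P`_i * x 0 i ^+ m.-1), (\row_(j < N./2.+1) Q`_j); split.
  + have xm : forall i : 'I_n, P`_i * x 0 i ^+ m.-1 = (x 0 i ^+ j) ^+ 2.
      by move=> i; rewrite /P coef_Px -exprS prednK // mj pxg.
    apply: (@sum_pos _ _ i0) => [i|]; rewrite xm //; exact: sqr_ge0.
  + by apply: row_poly_neq0 => //; exact: expf_neq0.
  + by rewrite gen // eY hankel_L.
Qed.
End Hankel.

Theorem theorem5 (R : realType) (m n : nat) (h : 'rV[R]_(m * (n - 1)).+1) :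
  (2 <= m)%N -> (1 <= n)%N -> ~~ odd (m * (n - 1)) ->
  [/\ (forall a : R, eigenvalue (@hankel_matrix R m n h) a -> 0 <= a) ->
        (forall lam : R, H_eigenvalue (@hankel_tensor R m n h) lam -> 0 <= lam),
      (forall a : R, eigenvalue (@hankel_matrix R m n h) a -> 0 < a) ->
        (forall lam : R, H_eigenvalue (@hankel_tensor R m n h) lam -> 0 < lam),
      (forall a : R, eigenvalue (@hankel_matrix R m n h) a -> a <= 0) ->
        (forall lam : R, H_eigenvalue (@hankel_tensor R m n h) lam -> lam <= 0) &
      (forall a : R, eigenvalue (@hankel_matrix R m n h) a -> a < 0) ->
        (forall lam : R, H_eigenvalue (@hankel_tensor R m n h) lam -> lam < 0)].
Proof.
move=> m2 n1 eN.
have Hs : (hankel_matrix h)^T = hankel_matrix h.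
  by apply/matrixP => i j; rewrite !mxE addnC.
split => ev lam /(@key R m n h lam m2 n1 eN) [S [q [S0 qn0 e]]].
- by rewrite -(pmulr_lge0 _ S0) e; apply: (@psd_ge0 _ _ _ Hs ev).
- by rewrite -(pmulr_lgt0 _ S0) e; apply: (@psd_gt0 _ _ _ Hs ev).
- by rewrite -(pmulr_lle0 _ S0) e; apply: (@nsd_le0 _ _ _ Hs ev).
- by rewrite -(pmulr_llt0 _ S0) e; apply: (@nsd_lt0 _ _ _ Hs ev).
Qed.
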